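(* Fix $L>0$ and define $$\Delta_n(FP-ES;L)=\max_{T\in RB(n)}\max_{i\in[n]}\sup_{l>0:\ \sum_e l(e)=L}\{FP_T(i)-ES_T(i)\},$$ and $\Delta_n(ES-FP;L)$ analogously with $ES_T(i)-FP_T(i)$. The suprema run over strictly positive edge-length assignments with total length $L$. (i) For $n\ge 2$, $\Delta_n(FP-ES;L)=\lambda_n L$, where $\lambda_n=0$ for $n=2,3$, $\lambda_4=\tfrac1{12}$, $\lambda_5=\tfrac18$, and $\lambda_n=\tfrac{11}{80}$ for $n\ge 6$. For $n\ge 3$, $\Delta_n(ES-FP;L)=\left(\tfrac12-\tfrac1{n-1}\right)L$. (ii) If the suprema are restricted to positive edge-length assignments with total length $L$ that also satisfy (MC), then the same formulas hold with $L$ replaced by $L/2$. That is, $\Delta_n(FP-ES;L)=\lambda_n L/2$ for $n\ge2$, and $\Delta_n(ES-FP;L)=\left(\tfrac12-\tfrac1{n-1}\right)L/2$ for $n\ge 3$.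
   Context: $RB(n)$ is the set of rooted binary phylogenetic trees with leaf set $[n]=\{1,\dots,n\}$: rooted trees in which every non-leaf vertex has out-degree exactly 2, leaves labelled bijectively by $[n]$, identified up to label-preserving isomorphism. Each edge has length $l(e)>0$, and $n(e)$ is the number of leaves descended from $e$. $FP_T(i)=\sum_{e\in P(T;\rho,i)} l(e)/n(e)$ and $ES_T(i)=\sum_{e\in P(T;\rho,i)} l(e)/2^{k(e,i)}$, where $P(T;\rho,i)$ is the root-to-$i$ path and $k(e,i)$ is the number of edges strictly between $e$ and $i$ on that path. (MC): all root-to-leaf path lengths are equal. *)

(* Defs.v *)
From Stdlib Require Import Reals List Permutation Arith.
Import ListNotations.
Open Scope R_scope.

(* A [Node l1 t1 l2 t2]
   is an internal vertex with two children t1, t2; [l1] (resp. [l2]) is the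
   length of the edge from this vertex to the root of t1 (resp. t2).
   The root has no incoming edge. *)
Inductive ltree : Type :=
| Leaf : nat -> ltree
| Node : R -> ltree -> R -> ltree -> ltree.

Fixpoint leaves (t : ltree) : list nat :=
  match t with
  | Leaf k => [k]
  | Node _ t1 _ t2 => leaves t1 ++ leaves t2
  end.

(* n(e) for the edge above subtree t *)
Definition nleaves (t : ltree) : nat := length (leaves t).

Definition memb (i : nat) (t : ltree) : bool := existsb (Nat.eqb i) (leaves t).

Definition leaf_set_is (n : nat) (t : ltree) : Prop :=
  Permutation (leaves t) (seq 1 n).

Fixpoint pos_lengths (t : ltree) : Prop :=
  match t with
  | Leaf _ => True
  | Node l1 t1 l2 t2 => 0 < l1 /\ pos_lengths t1 /\ 0 < l2 /\ pos_lengths t2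
  end.

Fixpoint total_length (t : ltree) : R :=
  match t with
  | Leaf _ => 0
  | Node l1 t1 l2 t2 => l1 + total_length t1 + l2 + total_length t2
  end.

Fixpoint depth (t : ltree) (i : nat) : nat :=
  match t with
  | Leaf _ => 0
  | Node _ t1 _ t2 =>
      if memb i t1 then S (depth t1 i)
      else if memb i t2 then S (depth t2 i) else 0
  end.

Fixpoint path_length (t : ltree) (i : nat) : R :=
  match t with
  | Leaf _ => 0
  | Node l1 t1 l2 t2 =>
      if memb i t1 then l1 + path_length t1 i
      else if memb i t2 then l2 + path_length t2 i else 0
  end.

Fixpoint FP (t : ltree) (i : nat) : R :=
  match t with
  | Leaf _ => 0
  | Node l1 t1 l2 t2 =>
      if memb i t1 then l1 / INR (nleaves t1) + FP t1 i
      else if memb i t2 then l2 / INR (nleaves t2) + FP t2 i else 0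
  end.

(* Equal splits index: sum over root-to-i edges of l(e)/2^k(e,i),
   k(e,i) = number of edges strictly between e and i, i.e. the depth of i
   in the subtree below e. *)
Fixpoint ES (t : ltree) (i : nat) : R :=
  match t with
  | Leaf _ => 0
  | Node l1 t1 l2 t2 =>
      if memb i t1 then l1 / 2 ^ (depth t1 i) + ES t1 i
      else if memb i t2 then l2 / 2 ^ (depth t2 i) + ES t2 i else 0
  end.

Definition MC (t : ltree) : Prop :=
  forall i j, In i (leaves t) -> In j (leaves t) -> path_length t i = path_length t j.

Definition values (f : ltree -> nat -> R) (mc : bool) (n : nat) (L : R) (x : R) : Prop :=
  exists (t : ltree) (i : nat),
    leaf_set_is n t /\ In i (seq 1 n) /\ pos_lengths t /\ total_length t = L /\
    (if mc then MC t else True) /\ x = f t i.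

Definition FPminusES (t : ltree) (i : nat) : R := FP t i - ES t i.
Definition ESminusFP (t : ltree) (i : nat) : R := ES t i - FP t i.

Definition lambda (n : nat) : R :=
  match n with
  | 0 | 1 | 2 | 3 => 0
  | 4 => 1 / 12
  | 5 => 1 / 8
  | _ => 11 / 80
  end.

(* Main.v *)
Require Import Defs.
From Stdlib Require Import Reals List Lra Lia Permutation Arith.
Import ListNotations.
Open Scope R_scope.

Fixpoint wsum (g : nat -> nat -> R) (t : ltree) (i : nat) : R :=
  match t with
  | Leaf _ => 0
  | Node l1 t1 l2 t2 =>
      if memb i t1 then l1 * g (depth t1 i) (nleaves t1) + wsum g t1 i
      else if memb i t2 then l2 * g (depth t2 i) (nleaves t2) + wsum g t2 i else 0
  end.

Definition gFE (k m : nat) : R := 1 / INR m - 1 / 2 ^ k.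
Definition gEF (k m : nat) : R := 1 / 2 ^ k - 1 / INR m.

Lemma FE_wsum t i : FP t i - ES t i = wsum gFE t i.
Proof.
  induction t as [a|l1 t1 IH1 l2 t2 IH2]; simpl; [lra|].
  destruct (memb i t1); [rewrite <- IH1; unfold gFE, Rdiv; ring|].
  destruct (memb i t2); [rewrite <- IH2; unfold gFE, Rdiv; ring|lra].
Qed.

Lemma EF_wsum t i : ES t i - FP t i = wsum gEF t i.
Proof.
  induction t as [a|l1 t1 IH1 l2 t2 IH2]; simpl; [lra|].
  destruct (memb i t1); [rewrite <- IH1; unfold gEF, Rdiv; ring|].
  destruct (memb i t2); [rewrite <- IH2; unfold gEF, Rdiv; ring|lra].
Qed.

Lemma memb_In i t : memb i t = true <-> In i (leaves t).
Proof.
  unfold memb. rewrite existsb_exists. split.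
  - intros [x [Hx He]]. apply Nat.eqb_eq in He. subst. exact Hx.
  - intros H. exists i. split; [exact H| apply Nat.eqb_refl].
Qed.

Lemma memb_node i l1 t1 l2 t2 :
  memb i (Node l1 t1 l2 t2) = (memb i t1 || memb i t2)%bool.
Proof. unfold memb. simpl. apply existsb_app. Qed.

Lemma nleaves_pos t : (1 <= nleaves t)%nat.
Proof.
  induction t; unfold nleaves in *; simpl; [lia|]. rewrite length_app. lia.
Qed.

Lemma depth_le i t : memb i t = true -> (depth t i + 1 <= nleaves t)%nat.
Proof.
  induction t as [a|l1 t1 IH1 l2 t2 IH2]; intros H; simpl; [unfold nleaves; simpl; lia|].
  unfold nleaves; simpl; rewrite length_app. fold (nleaves t1) (nleaves t2).
  pose proof (nleaves_pos t1); pose proof (nleaves_pos t2).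
  rewrite memb_node in H.
  destruct (memb i t1) eqn:E1; [specialize (IH1 eq_refl); lia|].
  destruct (memb i t2) eqn:E2; [specialize (IH2 eq_refl); lia|discriminate].
Qed.

Lemma depth0 i t : memb i t = true -> depth t i = 0%nat -> nleaves t = 1%nat.
Proof.
  destruct t as [a|l1 t1 l2 t2]; intros H D; [reflexivity|].
  simpl in D. rewrite memb_node in H.
  destruct (memb i t1); [discriminate|].
  destruct (memb i t2); discriminate.
Qed.

Lemma nleaves_node l1 t1 l2 t2 : nleaves (Node l1 t1 l2 t2) = (nleaves t1 + nleaves t2)%nat.
Proof. unfold nleaves; simpl; apply length_app. Qed.

Lemma wsum_bound (g : nat -> nat -> R) (C : R) (M : nat) :
  (forall k m, (k + 1 <= m)%nat -> (m <= M)%nat -> (k = 0%nat -> m = 1%nat) -> g k m <= C) ->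
  forall t i, pos_lengths t -> (nleaves t <= S M)%nat -> wsum g t i <= C * path_length t i.
Proof.
  intros Hg t i. induction t as [a|l1 t1 IH1 l2 t2 IH2]; intros Hp Hn; simpl; [lra|].
  destruct Hp as [p1 [P1 [p2 P2]]]. rewrite nleaves_node in Hn.
  pose proof (nleaves_pos t1); pose proof (nleaves_pos t2).
  destruct (memb i t1) eqn:E1.
  { assert (g (depth t1 i) (nleaves t1) <= C).
    { apply Hg; [apply depth_le; auto|lia|intros; apply (depth0 i); auto]. }
    specialize (IH1 P1 ltac:(lia)).
    assert (l1 * g (depth t1 i) (nleaves t1) <= l1 * C) by (apply Rmult_le_compat_l; lra).
    nra. }
  destruct (memb i t2) eqn:E2; [|lra].
  assert (g (depth t2 i) (nleaves t2) <= C).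
  { apply Hg; [apply depth_le; auto|lia|intros; apply (depth0 i); auto]. }
  specialize (IH2 P2 ltac:(lia)).
  assert (l2 * g (depth t2 i) (nleaves t2) <= l2 * C) by (apply Rmult_le_compat_l; lra).
  nra.
Qed.

Lemma total_nonneg t : pos_lengths t -> 0 <= total_length t.
Proof.
  induction t; simpl; [lra|]. intros [? [? [? ?]]]. specialize (IHt1 H0). specialize (IHt2 H2). lra.
Qed.

Lemma path_le_total t i : pos_lengths t -> path_length t i <= total_length t.
Proof.
  induction t as [a|l1 t1 IH1 l2 t2 IH2]; simpl; [lra|]. intros [p1 [P1 [p2 P2]]].
  pose proof (total_nonneg _ P1); pose proof (total_nonneg _ P2).
  specialize (IH1 P1); specialize (IH2 P2).
  destruct (memb i t1); [lra|]. destruct (memb i t2); lra.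
Qed.

Lemma leaves_ne t : exists j, In j (leaves t).
Proof.
  induction t as [a|l1 t1 IH1 l2 t2 IH2]; simpl; [exists a; auto|].
  destruct IH1 as [j Hj]; exists j; apply in_or_app; auto.
Qed.

Lemma nodup_disj (A : Type) (l1 l2 : list A) a :
  NoDup (l1 ++ l2) -> In a l2 -> ~ In a l1.
Proof.
  induction l1 as [|x l1 IH]; simpl; intros H H2; [tauto|].
  inversion H; subst. intros [E|E].
  - subst. apply H3. apply in_or_app; auto.
  - eapply IH; eauto.
Qed.

Lemma path_MC t i : pos_lengths t -> NoDup (leaves t) -> MC t -> In i (leaves t) ->
  2 * path_length t i <= total_length t.
Proof.
  destruct t as [a|l1 t1 l2 t2]; simpl; [lra|]. intros [p1 [P1 [p2 P2]]] ND Hmc Hi.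
  pose proof (path_le_total t1 i P1) as A1; pose proof (path_le_total t2 i P2) as A2.
  destruct (memb i t1) eqn:E1.
  - destruct (leaves_ne t2) as [j Hj].
    assert (Ej : memb j t1 = false).
    { destruct (memb j t1) eqn:E; auto. exfalso. apply memb_In in E.
      simpl in ND. eapply nodup_disj; eauto. }
    assert (Ej2 : memb j t2 = true) by (apply memb_In; auto).
    assert (Hij := Hmc i j Hi ltac:(simpl; apply in_or_app; auto)).
    simpl in Hij. rewrite E1, Ej, Ej2 in Hij.
    pose proof (path_le_total t2 j P2). lra.
  - destruct (leaves_ne t1) as [j Hj].
    assert (Ej : memb j t1 = true) by (apply memb_In; auto).
    assert (Hij := Hmc i j Hi ltac:(simpl; apply in_or_app; auto)).
    simpl in Hij. rewrite E1, Ej in Hij.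
    pose proof (path_le_total t1 j P1).
    destruct (memb i t2) eqn:E2; pose proof (total_nonneg _ P1); pose proof (total_nonneg _ P2); lra.
Qed.
Definition h (k : nat) : R := gFE k (S k).

Lemma pow2_ge k : INR (S k) <= 2 ^ k.
Proof.
  induction k; [simpl; lra|]. rewrite S_INR. simpl pow. rewrite S_INR in *. pose proof (pos_INR k). lra.
Qed.

Lemma h_nonneg k : 0 <= h k.
Proof.
  unfold h, gFE. pose proof (pow2_ge k). pose proof (lt_0_INR (S k) ltac:(lia)).
  assert (1 / 2 ^ k <= 1 / INR (S k)).
  { unfold Rdiv; rewrite !Rmult_1_l; apply Rinv_le_contravar; lra. }
  lra.
Qed.

Lemma h_max k : h k <= 11/80.
Proof.
  do 7 (destruct k as [|k]; [unfold h, gFE; simpl; lra|]).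
  unfold h, gFE.
  assert (8 <= INR (S (S (S (S (S (S (S (S k)))))))))
    by (replace 8 with (INR 8) by (simpl; lra); apply le_INR; lia).
  assert (1 / INR (S (S (S (S (S (S (S (S k)))))))) <= 1/8).
  { unfold Rdiv; rewrite !Rmult_1_l; apply Rinv_le_contravar; lra. }
  assert (0 < 1 / 2 ^ (S (S (S (S (S (S (S k))))))))
    by (apply Rdiv_lt_0_compat; [lra| apply pow_lt; lra]).
  lra.
Qed.

Lemma h_lambda n k : (k + 2 <= n)%nat -> h k <= lambda n.
Proof.
  intros H. pose proof (h_max k).
  destruct n as [|[|[|[|[|[|n]]]]]]; try lia; simpl lambda; try lra;
  destruct k as [|[|[|[|k]]]]; try lia; unfold h, gFE; simpl; lra.
Qed.

Lemma gFE_bound n k m : (2 <= n)%nat -> (k + 1 <= m)%nat -> (m <= n - 1)%nat -> gFE k m <= lambda n.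
Proof.
  intros Hn H1 H2. apply Rle_trans with (h k); [|apply h_lambda; lia].
  unfold h, gFE.
  assert (INR (S k) <= INR m) by (apply le_INR; lia).
  pose proof (lt_0_INR (S k) ltac:(lia)).
  assert (1 / INR m <= 1 / INR (S k)).
  { unfold Rdiv; rewrite !Rmult_1_l; apply Rinv_le_contravar; lra. }
  lra.
Qed.

Lemma CEF_nonneg n : (3 <= n)%nat -> 0 <= 1 / 2 - 1 / (INR n - 1).
Proof.
  intros H. assert (3 <= INR n) by (replace 3 with (INR 3) by (simpl; lra); apply le_INR; lia).
  assert (1 / (INR n - 1) <= 1/2).
  { unfold Rdiv; rewrite !Rmult_1_l; apply Rinv_le_contravar; lra. }
  lra.
Qed.

Lemma gEF_bound n k m : (3 <= n)%nat -> (k + 1 <= m)%nat -> (m <= n - 1)%nat ->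
  (k = 0%nat -> m = 1%nat) -> gEF k m <= 1 / 2 - 1 / (INR n - 1).
Proof.
  intros Hn H1 H2 H3. pose proof (CEF_nonneg n Hn).
  destruct k as [|k].
  - rewrite H3 by auto. unfold gEF; simpl; lra.
  - unfold gEF.
    assert (2 <= 2 ^ S k) by (simpl; pose proof (pow2_ge k); pose proof (pos_INR k); rewrite S_INR in *; lra).
    assert (1 / 2 ^ S k <= 1/2).
    { unfold Rdiv; rewrite !Rmult_1_l; apply Rinv_le_contravar; lra. }
    assert (INR m <= INR n - 1).
    { assert (INR (m + 1) <= INR n) by (apply le_INR; lia). rewrite plus_INR in *; simpl in *; lra. }
    pose proof (lt_0_INR m ltac:(lia)).
    assert (1 / (INR n - 1) <= 1 / INR m).
    { unfold Rdiv; rewrite !Rmult_1_l; apply Rinv_le_contravar; lra. }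
    lra.
Qed.
Fixpoint mcat (e : R) (i : nat) (l : list nat) : ltree :=
  match l with
  | [] => Leaf i
  | a :: r => Node e (mcat e i r) (e * INR (S (length r))) (Leaf a)
  end.

Lemma mcat_leaves e i l : leaves (mcat e i l) = i :: rev l.
Proof. induction l; simpl; [reflexivity|]. rewrite IHl. reflexivity. Qed.

Lemma mcat_nleaves e i l : nleaves (mcat e i l) = S (length l).
Proof. unfold nleaves. rewrite mcat_leaves. simpl. rewrite length_rev. reflexivity. Qed.

Lemma mcat_memb e i l : memb i (mcat e i l) = true.
Proof. unfold memb. rewrite mcat_leaves. simpl. rewrite Nat.eqb_refl. reflexivity. Qed.

Lemma mcat_depth e i l : depth (mcat e i l) i = length l.
Proof. induction l; simpl; [reflexivity|]. rewrite mcat_memb, IHl. reflexivity. Qed.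

Lemma mcat_total e i l : total_length (mcat e i l) = e * total_length (mcat 1 i l).
Proof. induction l; simpl; [ring|]. rewrite IHl. ring. Qed.

Lemma mcat_pos e i l : 0 < e -> pos_lengths (mcat e i l).
Proof.
  intros He. induction l; cbn [mcat pos_lengths]; [exact I|]. repeat split; auto.
  apply Rmult_lt_0_compat; [lra| apply lt_0_INR; lia].
Qed.

Definition Hgt (t : ltree) (hh : R) := forall j, In j (leaves t) -> path_length t j = hh.

Lemma Hgt_leaf a : Hgt (Leaf a) 0.
Proof. intros j _. reflexivity. Qed.

Lemma Hgt_node l1 t1 h1 l2 t2 h2 : Hgt t1 h1 -> Hgt t2 h2 -> l1 + h1 = l2 + h2 ->
  Hgt (Node l1 t1 l2 t2) (l1 + h1).
Proof.
  intros H1 H2 E j Hj. simpl in Hj |- *. apply in_app_or in Hj.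
  destruct (memb j t1) eqn:E1; [rewrite H1; auto; apply memb_In; auto|].
  destruct Hj as [Hj|Hj]; [apply memb_In in Hj; congruence|].
  assert (E2 : memb j t2 = true) by (apply memb_In; auto). rewrite E2, H2; auto.
Qed.

Lemma Hgt_MC t hh : Hgt t hh -> MC t.
Proof. intros H i j Hi Hj. rewrite H, H; auto. Qed.

Lemma mcat_Hgt e i l : Hgt (mcat e i l) (e * INR (length l)).
Proof.
  induction l; cbn [mcat length]; [rewrite Rmult_0_r; apply Hgt_leaf|].
  replace (e * INR (S (length l))) with (e + e * INR (length l)) by (rewrite S_INR; ring).
  apply (Hgt_node _ _ _ _ _ 0); [exact IHl| apply Hgt_leaf| ring].
Qed.

Lemma mcat_wsum_FE e i l : 0 <= e -> 0 <= wsum gFE (mcat e i l) i.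
Proof.
  intros He. induction l; simpl; [lra|]. rewrite mcat_memb, mcat_depth, mcat_nleaves.
  pose proof (h_nonneg (length l)). unfold h in H. nra.
Qed.

Lemma wsum_left g i l1 t1 l2 t2 : memb i t1 = true ->
  wsum g (Node l1 t1 l2 t2) i = l1 * g (depth t1 i) (nleaves t1) + wsum g t1 i.
Proof. intros H; simpl; rewrite H; reflexivity. Qed.

Lemma wsum_right g i l1 t1 l2 t2 : memb i t1 = false -> memb i t2 = true ->
  wsum g (Node l1 t1 l2 t2) i = l2 * g (depth t2 i) (nleaves t2) + wsum g t2 i.
Proof. intros H H'; simpl; rewrite H, H'; reflexivity. Qed.

Lemma lub_approx (S : R -> Prop) (c : R) :
  (forall x, S x -> x <= c) ->
  (exists e0 K, 0 < e0 /\ 0 <= K /\ forall e, 0 < e < e0 -> exists x, S x /\ c - K * e <= x) ->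
  is_lub S c.
Proof.
  intros Hub [e0 [K [He0 [HK Hx]]]]. split; [exact Hub|].
  intros b Hb. destruct (Rle_dec c b) as [|Hlt]; [auto|exfalso].
  apply Rnot_le_lt in Hlt.
  set (e := Rmin (e0 / 2) ((c - b) / (2 * (K + 1)))).
  assert (Hp : 0 < (c - b) / (2 * (K + 1))) by (apply Rdiv_lt_0_compat; lra).
  assert (e <= e0/2) by apply Rmin_l.
  assert (e <= (c - b) / (2 * (K + 1))) by apply Rmin_r.
  assert (0 < e) by (unfold e; apply Rmin_glb_lt; lra).
  destruct (Hx e ltac:(lra)) as [x [Sx Hcx]].
  specialize (Hb x Sx).
  assert (e * (2 * (K + 1)) <= c - b).
  { apply Rmult_le_reg_r with (/ (2 * (K+1))). apply Rinv_0_lt_compat; lra.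
    rewrite Rmult_assoc, Rinv_r by lra. unfold Rdiv in *. lra. }
  nra.
Qed.

Lemma ub_gen (g : nat -> nat -> R) (C : R) (n : nat) (L : R) (mc : bool) (f : ltree -> nat -> R) :
  0 <= C -> (1 <= n)%nat ->
  (forall k m, (k + 1 <= m)%nat -> (m <= n - 1)%nat -> (k = 0%nat -> m = 1%nat) -> g k m <= C) ->
  (forall t i, f t i = wsum g t i) ->
  forall x, values f mc n L x -> x <= C * (if mc then L / 2 else L).
Proof.
  intros HC Hn Hg Hf x [t [i [Hls [Hi [Hp [Ht [Hmc Hx]]]]]]].
  assert (Hnl : nleaves t = n).
  { unfold nleaves. rewrite (Permutation_length Hls). apply length_seq. }
  subst x. rewrite Hf.
  assert (W := wsum_bound g C (n - 1) Hg t i Hp ltac:(lia)).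
  destruct mc.
  - assert (ND : NoDup (leaves t)).
    { apply Permutation_NoDup with (seq 1 n); [apply Permutation_sym; auto| apply seq_NoDup]. }
    assert (Hin : In i (leaves t)) by (apply Permutation_in with (seq 1 n); [apply Permutation_sym|]; auto).
    pose proof (path_MC t i Hp ND Hmc Hin).
    assert (C * path_length t i <= C * (L / 2)) by (apply Rmult_le_compat_l; lra). lra.
  - pose proof (path_le_total t i Hp).
    assert (C * path_length t i <= C * L) by (apply Rmult_le_compat_l; lra). lra.
Qed.

Lemma lt_div_mul e L D : 0 < D -> e < L / D -> e * D < L.
Proof.
  intros HD H. apply Rmult_lt_compat_r with (r := D) in H; [|lra].
  unfold Rdiv in H. rewrite Rmult_assoc, Rinv_l in H by lra. lra.
Qed.

Lemma FE_split n : (2 <= n)%nat -> exists k m, n = (S (S k) + m)%nat /\ h k = lambda n.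
Proof.
  intros Hn.
  destruct n as [|[|[|[|[|[|p]]]]]]; try lia.
  - exists 0%nat, 0%nat; split; [reflexivity| unfold h, gFE; simpl; lra].
  - exists 1%nat, 0%nat; split; [reflexivity| unfold h, gFE; simpl; lra].
  - exists 2%nat, 0%nat; split; [reflexivity| unfold h, gFE; simpl; lra].
  - exists 3%nat, 0%nat; split; [reflexivity| unfold h, gFE; simpl; lra].
  - exists 4%nat, p; split; [reflexivity| unfold h, gFE; simpl; lra].
Qed.

Definition TFE (e x y : R) (k m : nat) : ltree :=
  Node x (mcat e 1 (rev (seq 2 k))) y (mcat e (S (S k)) (rev (seq (S (S (S k))) m))).

Lemma TFE_leaves e x y k m : leaf_set_is (S (S k) + m) (TFE e x y k m).
Proof.
  unfold leaf_set_is, TFE. simpl leaves. rewrite !mcat_leaves, !rev_involutive.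
  replace (S (S k) + m)%nat with (S k + S m)%nat by lia. rewrite seq_app.
  apply Permutation_refl.
Qed.

Lemma TFE_value e x y k m : 0 <= e -> x * h k <= wsum gFE (TFE e x y k m) 1.
Proof.
  intros He. unfold TFE. rewrite wsum_left by apply mcat_memb.
  rewrite mcat_depth, mcat_nleaves, length_rev, length_seq.
  pose proof (mcat_wsum_FE e 1 (rev (seq 2 k)) He). unfold h. lra.
Qed.

Lemma FE_lower (n : nat) (L : R) (mc : bool) : 0 < L -> (2 <= n)%nat ->
  exists e0 K, 0 < e0 /\ 0 <= K /\ forall e, 0 < e < e0 ->
    exists x, values FPminusES mc n L x /\ lambda n * (if mc then L / 2 else L) - K * e <= x.
Proof.
  intros HL Hn. destruct (FE_split n Hn) as [k [m [En Hk]]].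
  set (cA := total_length (mcat 1 1 (rev (seq 2 k)))).
  set (cB := total_length (mcat 1 (S (S k)) (rev (seq (S (S (S k))) m)))).
  assert (HA : 0 <= cA) by (apply total_nonneg, mcat_pos; lra).
  assert (HB : 0 <= cB) by (apply total_nonneg, mcat_pos; lra).
  pose proof (h_nonneg k) as Hh0. rewrite Hk in Hh0.
  assert (Ha : 0 <= INR k) by apply pos_INR.
  assert (Hb : 0 <= INR m) by apply pos_INR.
  destruct mc.
  - set (D := 1 + cA + cB + INR k + INR m).
    exists (L / D), (lambda n * D / 2). split; [apply Rdiv_lt_0_compat; unfold D; lra|].
    split; [unfold D, Rdiv; apply Rmult_le_pos; [apply Rmult_le_pos|]; lra|].
    intros e [He1 He2]. pose proof (lt_div_mul e L D ltac:(unfold D; lra) He2).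
    set (x := (L - e * (cA + cB) - e * INR k + e * INR m) / 2).
    set (y := (L - e * (cA + cB) + e * INR k - e * INR m) / 2).
    assert (e * INR m >= 0) by (apply Rle_ge, Rmult_le_pos; lra).
    assert (e * INR k >= 0) by (apply Rle_ge, Rmult_le_pos; lra).
    assert (Hx : L / 2 - e * D / 2 <= x) by (unfold x, D; lra).
    assert (Hy : L / 2 - e * D / 2 <= y) by (unfold y, D; lra).
    exists (wsum gFE (TFE e x y k m) 1). split.
    + exists (TFE e x y k m), 1%nat. rewrite En. split; [apply TFE_leaves|].
      split; [simpl; auto|].
      split; [unfold TFE; simpl pos_lengths; repeat split; try apply mcat_pos; lra|].
      split; [unfold TFE; simpl total_length; rewrite !(mcat_total e); fold cA cB; unfold x, y; lra|].
      split; [|unfold FPminusES; symmetry; apply FE_wsum].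
      apply Hgt_MC with (x + e * INR k). unfold TFE.
      pose proof (mcat_Hgt e 1 (rev (seq 2 k))) as G1.
      pose proof (mcat_Hgt e (S (S k)) (rev (seq (S (S (S k))) m))) as G2.
      rewrite length_rev, length_seq in G1, G2.
      apply Hgt_node with (e * INR m); auto. unfold x, y; lra.
    + pose proof (TFE_value e x y k m ltac:(lra)) as TV. rewrite Hk in TV.
      assert ((L / 2 - e * D / 2) * lambda n <= x * lambda n) by (apply Rmult_le_compat_r; lra).
      lra.
  - set (D := 1 + cA + cB).
    exists (L / D), (lambda n * D). split; [apply Rdiv_lt_0_compat; unfold D; lra|].
    split; [unfold D; apply Rmult_le_pos; lra|].
    intros e [He1 He2]. pose proof (lt_div_mul e L D ltac:(unfold D; lra) He2).
    set (x := L - e * D).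
    exists (wsum gFE (TFE e x e k m) 1). split.
    + exists (TFE e x e k m), 1%nat. rewrite En. split; [apply TFE_leaves|].
      split; [simpl; auto|].
      split; [unfold TFE; simpl pos_lengths; repeat split; try apply mcat_pos; unfold x; lra|].
      split; [unfold TFE; simpl total_length; rewrite !(mcat_total e); fold cA cB; unfold x, D; lra|].
      split; [exact I|unfold FPminusES; symmetry; apply FE_wsum].
    + pose proof (TFE_value e x e k m ltac:(lra)) as TV. rewrite Hk in TV.
      assert (x * lambda n = lambda n * L - lambda n * D * e) by (unfold x; ring). cbv beta iota. lra.
Qed.

Definition TEF (e x y : R) (m : nat) : ltree :=
  Node y (Leaf 1) x (Node (e * (1 + INR m)) (Leaf 2) e (mcat e 3 (rev (seq 4 m)))).

Lemma TEF_leaves e x y m : leaf_set_is (S (S (S m))) (TEF e x y m).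
Proof.
  unfold leaf_set_is, TEF. simpl leaves. rewrite !mcat_leaves, !rev_involutive.
  apply Permutation_refl.
Qed.

Lemma TEF_value e x y m : wsum gEF (TEF e x y m) 2 = x * gEF 1 (S (S m)).
Proof.
  unfold TEF. rewrite wsum_right by reflexivity.
  rewrite wsum_left by reflexivity.
  replace (nleaves (Node (e * (1 + INR m)) (Leaf 2) e (mcat e 3 (rev (seq 4 m)))))
    with (S (S m)) by (rewrite nleaves_node, mcat_nleaves, length_rev, length_seq; reflexivity).
  change (depth (Node (e * (1 + INR m)) (Leaf 2) e (mcat e 3 (rev (seq 4 m)))) 2) with 1%nat.
  change (depth (Leaf 2) 2) with 0%nat. change (nleaves (Leaf 2)) with 1%nat.
  unfold gEF. replace (INR 1) with 1 by reflexivity. rewrite pow_O. change (wsum _ (Leaf 2) 2) with 0. unfold Rdiv; ring.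
Qed.

Lemma EF_const m : 1 / 2 - 1 / (INR (S (S (S m))) - 1) = gEF 1 (S (S m)).
Proof.
  unfold gEF. rewrite (S_INR (S (S m))). rewrite pow_1.
  replace (INR (S (S m)) + 1 - 1) with (INR (S (S m))) by ring. reflexivity.
Qed.

Lemma EF_lower (n : nat) (L : R) (mc : bool) : 0 < L -> (3 <= n)%nat ->
  exists e0 K, 0 < e0 /\ 0 <= K /\ forall e, 0 < e < e0 ->
    exists x, values ESminusFP mc n L x /\
      (1 / 2 - 1 / (INR n - 1)) * (if mc then L / 2 else L) - K * e <= x.
Proof.
  intros HL Hn. pose proof (CEF_nonneg n Hn) as HC.
  destruct n as [|[|[|m]]]; try lia. rewrite EF_const in *.
  set (C := gEF 1 (S (S m))) in *.
  set (cC := total_length (mcat 1 3 (rev (seq 4 m)))).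
  assert (HcC : 0 <= cC) by (apply total_nonneg, mcat_pos; lra).
  assert (Hm : 0 <= INR m) by apply pos_INR.
  destruct mc.
  - set (D' := 2 * (1 + INR m) + 1 + cC). set (D := D' + 1).
    exists (L / D), (C * D' / 2). split; [apply Rdiv_lt_0_compat; unfold D, D'; lra|].
    split; [unfold D', Rdiv; apply Rmult_le_pos; [apply Rmult_le_pos|]; lra|].
    intros e [He1 He2]. pose proof (lt_div_mul e L D ltac:(unfold D, D'; lra) He2).
    set (x := (L - e * D') / 2). set (y := x + e * (1 + INR m)).
    assert (e * D' < L) by (unfold D in *; lra).
    assert (e * (1 + INR m) > 0) by (apply Rmult_lt_0_compat; lra).
    exists (wsum gEF (TEF e x y m) 2). split.
    + exists (TEF e x y m), 2%nat. split; [apply TEF_leaves|].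
      split; [simpl; auto|].
      split; [unfold TEF; simpl pos_lengths; repeat split; try apply mcat_pos; unfold y, x; lra|].
      split; [unfold TEF; simpl total_length; rewrite !(mcat_total e); fold cC; unfold y, x, D'; lra|].
      split; [|unfold ESminusFP; symmetry; apply EF_wsum].
      apply Hgt_MC with (y + 0). unfold TEF.
      pose proof (mcat_Hgt e 3 (rev (seq 4 m))) as G2.
      rewrite length_rev, length_seq in G2.
      apply Hgt_node with (e * (1 + INR m) + 0); [apply Hgt_leaf| |unfold y; lra].
      apply Hgt_node with (e * INR m); [apply Hgt_leaf|auto|lra].
    + rewrite TEF_value. fold C. cbv beta iota. assert (x * C = C * (L / 2) - C * D' / 2 * e) by (unfold x; field). lra.
  - set (D := 1 + (1 + INR m) + 1 + cC).
    exists (L / D), (C * D). split; [apply Rdiv_lt_0_compat; unfold D; lra|].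
    split; [unfold D; apply Rmult_le_pos; lra|].
    intros e [He1 He2]. pose proof (lt_div_mul e L D ltac:(unfold D; lra) He2).
    set (x := L - e * D).
    assert (e * (1 + INR m) > 0) by (apply Rmult_lt_0_compat; lra).
    exists (wsum gEF (TEF e x e m) 2). split.
    + exists (TEF e x e m), 2%nat. split; [apply TEF_leaves|].
      split; [simpl; auto|].
      split; [unfold TEF; simpl pos_lengths; repeat split; try apply mcat_pos; unfold x; lra|].
      split; [unfold TEF; simpl total_length; rewrite !(mcat_total e); fold cC; unfold x, D; lra|].
      split; [exact I|unfold ESminusFP; symmetry; apply EF_wsum].
    + rewrite TEF_value. fold C. cbv beta iota. assert (x * C = C * L - C * D * e) by (unfold x; ring). lra.
Qed.

Theorem theorem3 (L : R) (HL : 0 < L) :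
  (forall n : nat, (2 <= n)%nat ->
     is_lub (values FPminusES false n L) (lambda n * L)) /\
  (forall n : nat, (3 <= n)%nat ->
     is_lub (values ESminusFP false n L) ((1 / 2 - 1 / (INR n - 1)) * L)) /\
  (forall n : nat, (2 <= n)%nat ->
     is_lub (values FPminusES true n L) (lambda n * (L / 2))) /\
  (forall n : nat, (3 <= n)%nat ->
     is_lub (values ESminusFP true n L) ((1 / 2 - 1 / (INR n - 1)) * (L / 2))).
Proof.
  assert (FE : forall mc n, (2 <= n)%nat ->
     is_lub (values FPminusES mc n L) (lambda n * (if mc then L / 2 else L))).
  { intros mc n Hn. apply lub_approx; [|apply FE_lower; auto].
    apply (ub_gen gFE); [pose proof (h_lambda n 0 ltac:(lia)); pose proof (h_nonneg 0); lra|lia| |].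
    - intros k m H1 H2 _. apply gFE_bound; lia.
    - intros; apply FE_wsum. }
  assert (EF : forall mc n, (3 <= n)%nat ->
     is_lub (values ESminusFP mc n L) ((1 / 2 - 1 / (INR n - 1)) * (if mc then L / 2 else L))).
  { intros mc n Hn. apply lub_approx; [|apply EF_lower; auto].
    apply (ub_gen gEF); [apply CEF_nonneg; auto|lia| |].
    - intros k m H1 H2 H3. apply gEF_bound; auto.
    - intros; apply EF_wsum. }
  split; [intros n Hn; exact (FE false n Hn)|].
  split; [intros n Hn; exact (EF false n Hn)|].
  split; [intros n Hn; exact (FE true n Hn)|].
  intros n Hn; exact (EF true n Hn).
Qed.
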